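(* The following are equivalent: (a) the Collatz conjecture: $\sigma_\infty(n)<\infty$ for every positive integer $n$; (b) the space $\{h\in A(D):\mathcal{F}h=h\}$ of eigenvectors of $\mathcal{F}\in\mathcal{L}(A(D))$ for eigenvalue $1$ (together with $0$) has dimension $2$; (c) $\frac{z}{1-z}\in Z$; (d) $\lim_{n\to\infty}\mathcal{F}^n(z+z^2)=\frac{z}{1-z}$ in the topology of $A(D)$.
   Context: $T$ is the Collatz map $T(n)=\frac{3n+1}2$ ($n$ odd), $T(n)=\frac n2$ ($n$ even); for a positive integer $n$, $\sigma_\infty(n)$ is the least $k\ge0$ with $T^k(n)=1$ ($\infty$ if none). $D$ is the open unit disk, $A(D)$ the holomorphic functions on $D$ with the topology of uniform convergence on compact subsets. $\mathcal{F}$ is the operator on $A(D)$ given by $\mathcal{F}\big(\sum_{n\ge0}a_nz^n\big)=\sum_{n\ge0}a_nz^{2n}+\sum_{k\ge0}a_{3k+2}z^{2k+1}$. For $k\ge0$, $Pol_k(z)=\sum_{n\ge1:\,\sigma_\infty(n)=k}z^n$, and $Z$ is the closure in $A(D)$ of $\operatorname{span}\{Pol_k:k\ge0\}$. *)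

(* Defs.v *)
From Stdlib Require Import Reals Arith Lia Bool List.
From Coquelicot Require Import Coquelicot.
Open Scope R_scope.

(* The Collatz map T on positive integers (on nat; T 0 = 0 is irrelevant). *)
Definition T (n : nat) : nat :=
  if Nat.odd n then ((3 * n + 1) / 2)%nat else (n / 2)%nat.

(* sigma_inf n = k  (k finite): k is the least k with T^k n = 1. *)
Definition sigma_is (n k : nat) : bool :=
  Nat.eqb (Nat.iter k T n) 1 &&
  List.forallb (fun j => negb (Nat.eqb (Nat.iter j T n) 1)) (List.seq 0 k).

Definition sigma_finite (n : nat) : Prop := exists k, Nat.iter k T n = 1%nat.

(* Elements of A(D) are represented by their Taylor coefficient sequences
   a : nat -> C; a represents sum_n a_n z^n. *)
Definition term (a : nat -> C) (z : C) (n : nat) : C := (a n * z ^ n)%C.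

Definition PS (a : nat -> C) (z : C) : C :=
  (Series (fun n => fst (term a z n)), Series (fun n => snd (term a z n))).

(* a defines a holomorphic function on the open unit disk D:
   its power series converges at every point of D. *)
Definition inAD (a : nat -> C) : Prop :=
  forall z : C, Cmod z < 1 -> ex_series (term a z).

(* The operator F:  F(sum a_n z^n) = sum a_n z^(2n) + sum a_(3k+2) z^(2k+1). *)
Definition Fop (a : nat -> C) : nat -> C :=
  fun m => if Nat.odd m then a (3 * (m / 2) + 2)%nat else a (m / 2)%nat.

Definition Pol (k : nat) : nat -> C :=
  fun n => if (1 <=? n)%nat && sigma_is n k then 1%C else 0%C.

Definition polcomb (N : nat) (c : nat -> C) : nat -> C :=
  fun n => sum_n (fun k => (c k * Pol k n)%C) N.

(* g : C -> C lies in the closure Z (in the topology of uniform convergence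
   on compact subsets of D) of span{Pol_k}: every basic neighbourhood
   {f : sup_{|z|<=r} |f - g| < eps}, 0<r<1, eps>0, meets the span. *)
Definition inZ (g : C -> C) : Prop :=
  forall r eps : R, 0 < r < 1 -> 0 < eps ->
    exists (N : nat) (c : nat -> C),
      forall z : C, Cmod z <= r -> Cmod (g z - PS (polcomb N c) z)%C < eps.

(* A sequence of elements f_n of A(D) converges to g in A(D):
   uniform convergence on each closed disk |z| <= r < 1. *)
Definition cvg_AD (f : nat -> nat -> C) (g : C -> C) : Prop :=
  forall r eps : R, 0 < r < 1 -> 0 < eps ->
    exists N : nat, forall n : nat, (N <= n)%nat ->
      forall z : C, Cmod z <= r -> Cmod (PS (f n) z - g z)%C < eps.

Definition fixedF (h : nat -> C) : Prop := inAD h /\ forall m, Fop h m = h m.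

Definition fixed_space_dim2 : Prop :=
  exists h1 h2 : nat -> C,
    fixedF h1 /\ fixedF h2 /\
    (forall a b : C, (forall m, (a * h1 m + b * h2 m)%C = 0%C) -> a = 0%C /\ b = 0%C) /\
    (forall h, fixedF h -> exists a b : C, forall m, h m = (a * h1 m + b * h2 m)%C).

Definition zz2 : nat -> C := fun n => if (n =? 1)%nat || (n =? 2)%nat then 1%C else 0%C.

(* Main.v *)
Require Import Defs.
From Stdlib Require Import Reals Lia Arith Bool List FunctionalExtensionality ClassicalEpsilon Classical Psatz.
From Coquelicot Require Import Coquelicot.
Open Scope R_scope.

Lemma T_odd_eq n : Nat.odd n = true -> T n = (3 * (n/2) + 2)%nat.
Proof.
  intros H. unfold T. rewrite H.
  pose proof (Nat.div2_odd n) as E. rewrite H in E. simpl Nat.b2n in E.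
  rewrite Nat.div2_div in E.
  set (k := (n/2)%nat) in *. rewrite E.
  replace (3 * (2 * k + 1) + 1)%nat with ((3*k+2)*2)%nat by lia.
  apply Nat.div_mul; lia.
Qed.

Lemma Fop_T a m : Fop a m = a (T m).
Proof.
  unfold Fop. destruct (Nat.odd m) eqn:E.
  - rewrite (T_odd_eq m E). reflexivity.
  - unfold T. rewrite E. reflexivity.
Qed.

Lemma iter_Fop n a m : Nat.iter n Fop a m = a (Nat.iter n T m).
Proof.
  revert a m. induction n; intros a m; [reflexivity|].
  simpl. rewrite Fop_T. rewrite IHn. rewrite <- Nat.iter_succ_r. reflexivity.
Qed.

Lemma le_2T m : (m <= 2 * T m)%nat.
Proof.
  unfold T. destruct (Nat.odd m) eqn:E.
  - pose proof (Nat.div2_odd m) as D. rewrite E in D. simpl Nat.b2n in D.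
    rewrite Nat.div2_div in D.
    pose proof (Nat.div_mod (3*m+1) 2). pose proof (Nat.mod_upper_bound (3*m+1) 2). lia.
  - pose proof (Nat.div_mod m 2). pose proof (Nat.mod_upper_bound m 2).
    pose proof (Nat.div2_odd m) as D. rewrite E in D. simpl Nat.b2n in D.
    rewrite Nat.div2_div in D. lia.
Qed.

Lemma le_iter k m : (m <= 2 ^ k * Nat.iter k T m)%nat.
Proof.
  revert m. induction k; intros m; [simpl; lia|].
  rewrite Nat.iter_succ_r.
  pose proof (IHk (T m)). pose proof (le_2T m).
  rewrite Nat.pow_succ_r'. nia.
Qed.

Lemma T_eq1 x : T x = 1%nat -> x = 2%nat.
Proof.
  intros H. pose proof (le_2T x).
  unfold T in H. destruct (Nat.odd x) eqn:E.
  - pose proof (Nat.div2_odd x) as D. rewrite E in D. simpl Nat.b2n in D.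
    rewrite Nat.div2_div in D.
    pose proof (Nat.div_mod (3*x+1) 2). pose proof (Nat.mod_upper_bound (3*x+1) 2). lia.
  - pose proof (Nat.div_mod x 2). pose proof (Nat.mod_upper_bound x 2).
    pose proof (Nat.div2_odd x) as D. rewrite E in D. simpl Nat.b2n in D.
    rewrite Nat.div2_div in D. lia.
Qed.

Lemma T0 : T 0 = 0%nat. Proof. reflexivity. Qed.
Lemma T1 : T 1 = 2%nat. Proof. reflexivity. Qed.
Lemma T2 : T 2 = 1%nat. Proof. reflexivity. Qed.

Lemma T_pos m : (1 <= m)%nat -> (1 <= T m)%nat.
Proof. intros. pose proof (le_2T m). lia. Qed.

Lemma iter_1 j : Nat.iter j T 1%nat = 1%nat \/ Nat.iter j T 1%nat = 2%nat.
Proof.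
  induction j; simpl; [auto|]. destruct IHj as [-> | ->]; auto.
Qed.

Lemma iter_add a b m : Nat.iter (a + b) T m = Nat.iter a T (Nat.iter b T m).
Proof. apply Nat.iter_add. Qed.

Lemma in12_iff n m :
  (Nat.iter n T m = 1%nat \/ Nat.iter n T m = 2%nat) <->
  exists k, (k <= S n)%nat /\ Nat.iter k T m = 1%nat.
Proof.
  split.
  - intros [H|H]. exists n; split; auto.
    exists (S n). split; auto. simpl. rewrite H. reflexivity.
  - intros [k [Hk H]]. destruct (Nat.eq_dec k (S n)) as [->|Hne].
    + simpl in H. right. apply T_eq1. exact H.
    + replace n with ((n - k) + k)%nat by lia. rewrite iter_add, H. apply iter_1.
Qed.

Definition reachb (m N : nat) : bool :=
  existsb (fun k => Nat.eqb (Nat.iter k T m) 1) (seq 0 (S N)).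

Lemma forallb_negb {A} (f : A -> bool) l :
  forallb (fun j => negb (f j)) l = negb (existsb f l).
Proof. induction l; simpl; auto. rewrite IHl. destruct (f a); reflexivity. Qed.

Lemma reachb_S m N : reachb m (S N) = reachb m N || Nat.eqb (Nat.iter (S N) T m) 1.
Proof.
  unfold reachb. rewrite (seq_S (S N)). rewrite existsb_app. simpl.
  rewrite orb_false_r. reflexivity.
Qed.

Lemma reachb_0 m : reachb m 0 = Nat.eqb m 1.
Proof. unfold reachb. simpl. rewrite orb_false_r. reflexivity. Qed.

Lemma sigma_is_S m N : sigma_is m (S N) = Nat.eqb (Nat.iter (S N) T m) 1 && negb (reachb m N).
Proof. unfold sigma_is. rewrite forallb_negb. reflexivity. Qed.

Lemma sigma_is_0 m : sigma_is m 0 = Nat.eqb m 1.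
Proof. unfold sigma_is. simpl. rewrite andb_true_r. reflexivity. Qed.

Lemma reachb_spec m N : reachb m N = true <-> exists k, (k <= N)%nat /\ Nat.iter k T m = 1%nat.
Proof.
  unfold reachb. rewrite existsb_exists. split.
  - intros [k [Hin Hk]]. apply in_seq in Hin. apply Nat.eqb_eq in Hk. exists k. split; [lia|auto].
  - intros [k [Hk H]]. exists k. split. apply in_seq. lia. apply Nat.eqb_eq. auto.
Qed.

Lemma sigma_is_iter m k : sigma_is m k = true -> Nat.iter k T m = 1%nat.
Proof.
  unfold sigma_is. intros H. apply andb_true_iff in H. destruct H as [H _].
  apply Nat.eqb_eq; auto.
Qed.

Lemma Cplus_plus (a b : C) : plus a b = Cplus a b.
Proof. reflexivity. Qed.

Lemma polcomb1 N m :
  polcomb N (fun _ => 1%C) m = if (1 <=? m)%nat && reachb m N then 1%C else 0%C.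
Proof.
  unfold polcomb. induction N.
  - rewrite sum_O. unfold Pol. rewrite sigma_is_0, reachb_0.
    destruct ((1 <=? m)%nat && (m =? 1)%nat); simpl; apply injective_projections; simpl; ring.
  - rewrite sum_Sn, IHN. unfold Pol. rewrite sigma_is_S, reachb_S.
    rewrite Cplus_plus.
    destruct (1 <=? m)%nat;
    destruct (reachb m N); destruct (Nat.iter (S N) T m =? 1)%nat; simpl;
    apply injective_projections; simpl; ring.
Qed.

Lemma iter_zz2 n : Nat.iter n Fop zz2 = polcomb (S n) (fun _ => 1%C).
Proof.
  apply functional_extensionality. intros m.
  rewrite iter_Fop, polcomb1.
  destruct m as [|m].
  - assert (E : forall j, Nat.iter j T 0%nat = 0%nat).
    { induction j; simpl; auto. rewrite IHj. reflexivity. }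
    rewrite E. reflexivity.
  - simpl ((1 <=? S m)%nat). simpl andb.
    destruct (reachb (S m) (S n)) eqn:R.
    + apply reachb_spec in R. apply in12_iff in R. unfold zz2.
      destruct R as [-> | ->]; reflexivity.
    + unfold zz2. destruct (Nat.iter n T (S m) =? 1)%nat eqn:E1.
      * exfalso. apply Nat.eqb_eq in E1.
        assert (reachb (S m) (S n) = true) by (apply reachb_spec, in12_iff; auto).
        congruence.
      * destruct (Nat.iter n T (S m) =? 2)%nat eqn:E2; [|reflexivity].
        exfalso. apply Nat.eqb_eq in E2.
        assert (reachb (S m) (S n) = true) by (apply reachb_spec, in12_iff; auto).
        congruence.
Qed.

Lemma Cmod_sym (a b : C) : Cmod (a - b) = Cmod (b - a).
Proof. rewrite <- Cmod_opp. f_equal. ring. Qed.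

Lemma d_to_c : cvg_AD (fun n => Nat.iter n Fop zz2) (fun z => (z / (1 - z))%C) ->
  inZ (fun z => (z / (1 - z))%C).
Proof.
  intros H r eps Hr He. destruct (H r eps Hr He) as [N HN].
  exists (S N), (fun _ => 1%C). intros z Hz.
  rewrite <- iter_zz2. rewrite Cmod_sym. apply HN; auto.
Qed.

Lemma inAD01 (a : nat -> C) : (forall n, a n = 0%C \/ a n = 1%C) -> inAD a.
Proof.
  intros Ha z Hz. apply (@ex_series_le C_AbsRing C_CompleteNormedModule _ (fun n => Cmod z ^ n)).
  - intros n. change (norm (term a z n)) with (Cmod (term a z n)).
    unfold term. rewrite Cmod_mult, Cmod_pow.
    pose proof (Cmod_ge_0 z). pose proof (pow_le (Cmod z) n H).
    destruct (Ha n) as [-> | ->]; [rewrite Cmod_0 | rewrite Cmod_1]; nra.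
  - apply ex_series_geom. rewrite Rabs_pos_eq; auto. apply Cmod_ge_0.
Qed.

Definition e0 : nat -> C := fun m => if (m =? 0)%nat then 1%C else 0%C.
Definition u1 : nat -> C := fun m => if (m =? 0)%nat then 0%C else 1%C.

Lemma T_zero m : T m = 0%nat <-> m = 0%nat.
Proof. split; intros H. pose proof (le_2T m). lia. subst; reflexivity. Qed.

Lemma fixed_e0 : fixedF e0.
Proof.
  split. apply inAD01. intros n; unfold e0; destruct (n =? 0)%nat; auto.
  intros m. rewrite Fop_T. unfold e0.
  destruct m as [|m]; [reflexivity|].
  assert (E : (T (S m) =? 0)%nat = false).
  { apply Nat.eqb_neq. intros H. pose proof (le_2T (S m)). lia. }
  rewrite E. reflexivity.
Qed.

Lemma fixed_u1 : fixedF u1.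
Proof.
  split. apply inAD01. intros n; unfold u1; destruct (n =? 0)%nat; auto.
  intros m. rewrite Fop_T. unfold u1.
  destruct m as [|m]; [reflexivity|].
  assert (E : (T (S m) =? 0)%nat = false).
  { apply Nat.eqb_neq. intros H. pose proof (le_2T (S m)). lia. }
  rewrite E. reflexivity.
Qed.

Lemma fixed_T h : fixedF h -> forall m, h (T m) = h m.
Proof. intros [_ H] m. rewrite <- Fop_T. apply H. Qed.

Lemma fixed_iter h : fixedF h -> forall k m, h (Nat.iter k T m) = h m.
Proof.
  intros H k. induction k; intros m; simpl; auto. rewrite fixed_T; auto.
Qed.

Lemma a_to_b : (forall n : nat, (1 <= n)%nat -> sigma_finite n) -> fixed_space_dim2.
Proof.
  intros Hc. exists e0, u1. split; [apply fixed_e0|]. split; [apply fixed_u1|]. split.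
  - intros a b H. pose proof (H 0%nat) as H0. pose proof (H 1%nat) as H1.
    unfold e0, u1 in H0, H1. simpl in H0, H1.
    split.
    + rewrite <- H0. ring.
    + rewrite <- H1. ring.
  - intros h Hh. exists (h 0%nat), (h 1%nat). intros m. unfold e0, u1.
    destruct m as [|m]; simpl.
    + ring.
    + destruct (Hc (S m)) as [k Hk]; [lia|].
      rewrite <- (fixed_iter h Hh k (S m)), Hk. ring.
Qed.

Definition det3 (x00 x01 x02 x10 x11 x12 x20 x21 x22 : C) : C :=
  (x00 * (x11 * x22 - x12 * x21) - x01 * (x10 * x22 - x12 * x20) + x02 * (x10 * x21 - x11 * x20))%C.

Lemma det3_rank2 (a1 b1 a2 b2 a3 b3 p0 p1 p2 q0 q1 q2 : C) :
  det3 (a1*p0+b1*q0) (a1*p1+b1*q1) (a1*p2+b1*q2)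
       (a2*p0+b2*q0) (a2*p1+b2*q1) (a2*p2+b2*q2)
       (a3*p0+b3*q0) (a3*p1+b3*q1) (a3*p2+b3*q2) = 0%C.
Proof. unfold det3. ring. Qed.

Definition Rch (m : nat) : Prop := exists k, Nat.iter k T m = 1%nat.

Definition hR : nat -> C := fun m => if excluded_middle_informative (Rch m) then 1%C else 0%C.

Lemma Rch_T m : Rch (T m) <-> Rch m.
Proof.
  split.
  - intros [k Hk]. exists (S k). rewrite Nat.iter_succ_r. auto.
  - intros [k Hk]. destruct k as [|k].
    + simpl in Hk. subst. exists 1%nat. reflexivity.
    + exists k. rewrite <- Nat.iter_succ_r. auto.
Qed.

Lemma fixed_hR : fixedF hR.
Proof.
  split. apply inAD01. intros n; unfold hR; destruct excluded_middle_informative; auto.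
  intros m. rewrite Fop_T. unfold hR.
  destruct (excluded_middle_informative (Rch (T m))) as [A|A];
  destruct (excluded_middle_informative (Rch m)) as [B|B]; auto; exfalso.
  apply B, Rch_T, A. apply A, Rch_T, B.
Qed.

Lemma b_to_a : fixed_space_dim2 -> (forall n : nat, (1 <= n)%nat -> sigma_finite n).
Proof.
  intros [h1 [h2 [F1 [F2 [Ind Span]]]]] n0 Hn0.
  apply NNPP. intros Hns.
  destruct (Span e0 fixed_e0) as [a1 [b1 E1]].
  destruct (Span u1 fixed_u1) as [a2 [b2 E2]].
  destruct (Span hR fixed_hR) as [a3 [b3 E3]].
  pose proof (det3_rank2 a1 b1 a2 b2 a3 b3 (h1 0%nat) (h1 1%nat) (h1 n0) (h2 0%nat) (h2 1%nat) (h2 n0)) as D.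
  rewrite <- !E1, <- !E2, <- !E3 in D.
  assert (hR0 : hR 0%nat = 0%C).
  { unfold hR. destruct excluded_middle_informative as [[k Hk]|]; auto.
    exfalso. assert (forall j, Nat.iter j T 0%nat = 0%nat) as Z.
    { induction j; simpl; auto. rewrite IHj. reflexivity. }
    rewrite Z in Hk. discriminate. }
  assert (hR1 : hR 1%nat = 1%C).
  { unfold hR. destruct excluded_middle_informative as [|N]; auto.
    exfalso. apply N. exists 0%nat. reflexivity. }
  assert (hRn : hR n0 = 0%C).
  { unfold hR. destruct excluded_middle_informative as [H|]; auto. exfalso. apply Hns, H. }
  rewrite hR0, hR1, hRn in D.
  unfold e0, u1 in D. simpl in D.
  destruct n0 as [|n0]; [lia|]. simpl in D.
  unfold det3 in D.
  apply (f_equal fst) in D. simpl in D. lra.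
Qed.

Ltac cs := change (@plus C_AbelianMonoid) with Cplus in *; change (AbelianMonoid.sort C_AbelianMonoid) with C in *;
  change (@plus R_AbelianMonoid) with Rplus in *; change (AbelianMonoid.sort R_AbelianMonoid) with R in *.

Lemma csum_mult_l (a : C) (u : nat -> C) n :
  sum_n (fun k => (a * u k)%C) n = (a * sum_n u n)%C.
Proof.
  induction n. rewrite !sum_O. reflexivity.
  rewrite !sum_Sn, IHn. cs. ring.
Qed.

Lemma csum_mult_r (a : C) (u : nat -> C) n :
  sum_n (fun k => (u k * a)%C) n = (sum_n u n * a)%C.
Proof.
  induction n. rewrite !sum_O. reflexivity.
  rewrite !sum_Sn, IHn. cs. ring.
Qed.

Lemma csum_minus (u v : nat -> C) n :
  sum_n (fun k => (u k - v k)%C) n = (sum_n u n - sum_n v n)%C.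
Proof.
  induction n. rewrite !sum_O. reflexivity.
  rewrite !sum_Sn, IHn. cs. ring.
Qed.

Lemma csum_ext_loc (u v : nat -> C) n :
  (forall k, (k <= n)%nat -> u k = v k) -> sum_n u n = sum_n v n.
Proof. apply sum_n_ext_loc. Qed.

Lemma csum_zero (u : nat -> C) n :
  (forall k, (k <= n)%nat -> u k = 0%C) -> sum_n u n = RtoC 0.
Proof.
  induction n; intros H. rewrite sum_O. apply H; lia.
  rewrite sum_Sn, IHn, H; [cs; ring|lia|]. intros; apply H; lia.
Qed.

Lemma csum_delta (x : C) n0 n : (n0 <= n)%nat ->
  sum_n (fun m => if (m =? n0)%nat then x else RtoC 0) n = x.
Proof.
  induction n; intros H.
  - rewrite sum_O. replace n0 with 0%nat by lia. reflexivity.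
  - rewrite sum_Sn. cs. destruct (Nat.eq_dec n0 (S n)) as [E|E].
    + subst. rewrite Nat.eqb_refl. rewrite csum_zero. ring.
      intros k Hk. destruct (k =? S n)%nat eqn:Q; auto. apply Nat.eqb_eq in Q; lia.
    + rewrite IHn by lia. destruct (S n =? n0)%nat eqn:Q. apply Nat.eqb_eq in Q; lia. ring.
Qed.

Lemma csum_const1 n : sum_n (fun _ : nat => RtoC 1) n = RtoC (INR (S n)).
Proof.
  induction n. rewrite sum_O. simpl. reflexivity.
  rewrite sum_Sn, IHn. cs. rewrite (S_INR (S n)). rewrite RtoC_plus. reflexivity.
Qed.

Lemma Cmod_csum (f : nat -> C) n : Cmod (sum_n f n) <= sum_n (fun j => Cmod (f j)) n.
Proof.
  induction n. rewrite !sum_O. lra.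
  rewrite !sum_Sn. cs. eapply Rle_trans. apply Cmod_triangle. lra.
Qed.

Lemma rsum_bound (x : nat -> R) B n : (forall j, (j <= n)%nat -> x j <= B) ->
  sum_n x n <= INR (S n) * B.
Proof.
  induction n; intros H. rewrite sum_O. assert (x 0%nat <= B) by (apply H; lia). simpl INR. lra.
  rewrite sum_Sn. cs. rewrite (S_INR (S n)).
  assert (sum_n x n <= INR (S n) * B) by (apply IHn; intros; apply H; lia).
  specialize (H (S n) (le_n _)). lra.
Qed.

Definition cis (t : R) : C := (cos t, sin t).

Lemma cis_add a b : (cis a * cis b)%C = cis (a + b).
Proof.
  unfold cis, Cmult. simpl. rewrite cos_plus, sin_plus. f_equal; ring.
Qed.

Lemma cis_pow t j : (cis t ^ j)%C = cis (INR j * t).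
Proof.
  induction j. simpl. unfold cis. rewrite Rmult_0_l, cos_0, sin_0. reflexivity.
  rewrite Cpow_S, IHj, cis_add, S_INR. f_equal. ring.
Qed.

Lemma Cmod_cis t : Cmod (cis t) = 1.
Proof.
  unfold Cmod, cis. simpl. pose proof (sin2_cos2 t). unfold Rsqr in H.
  replace (cos t * (cos t * 1) + sin t * (sin t * 1)) with 1 by lra. apply sqrt_1.
Qed.

Lemma cis_ne1 t : 0 < t < 2 * PI -> cis t <> 1%C.
Proof.
  intros Ht E. apply (f_equal fst) in E. simpl in E.
  replace t with (2 * (t/2)) in E by field. rewrite cos_2a_sin in E.
  assert (0 < sin (t/2)) by (apply sin_gt_0; lra). nra.
Qed.

Lemma geo_sum (w : C) n : ((w - 1) * sum_n (fun j => w ^ j) n)%C = (w ^ (S n) - 1)%C.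
Proof.
  induction n. rewrite sum_O. simpl. ring.
  rewrite sum_Sn. cs. rewrite Cmult_plus_distr_l, IHn. rewrite !Cpow_S. ring.
Qed.

Lemma geo_zero (w : C) n : (w ^ (S n))%C = 1%C -> w <> 1%C -> sum_n (fun j => (w ^ j)%C) n = RtoC 0.
Proof.
  intros H1 H2. pose proof (geo_sum w n) as G. rewrite H1 in G.
  assert (Hw : (w - 1)%C <> 0%C). { intros E. apply H2. rewrite <- (Cplus_0_l 1), <- E. ring. }
  replace (sum_n (fun j => (w ^ j)%C) n) with (/ (w-1) * ((w - 1) * sum_n (fun j => (w ^ j)%C) n))%C
    by (cs; field; auto).
  rewrite G. cs. ring.
Qed.

Section DFT.
Variable L : nat.
Definition KK := S L.
Definition ww := cis (2 * PI / INR KK).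

Lemma INR_KK_pos : 0 < INR KK.
Proof. unfold KK. apply lt_0_INR. lia. Qed.

Lemma ww_pow k : (ww ^ k)%C = cis (2 * PI * (INR k / INR KK)).
Proof. unfold ww. rewrite cis_pow. f_equal. pose proof INR_KK_pos. field. lra. Qed.

Lemma ww_K : (ww ^ KK)%C = 1%C.
Proof.
  rewrite ww_pow. replace (INR KK / INR KK) with 1 by (pose proof INR_KK_pos; field; lra).
  unfold cis. rewrite Rmult_1_r, cos_2PI, sin_2PI. reflexivity.
Qed.

Lemma ww_ne1 k : (0 < k < KK)%nat -> (ww ^ k)%C <> 1%C.
Proof.
  intros Hk. rewrite ww_pow. apply cis_ne1. pose proof PI_RGT_0.
  assert (0 < INR k) by (apply lt_0_INR; lia).
  assert (INR k < INR KK) by (apply lt_INR; lia).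
  pose proof INR_KK_pos.
  split. apply Rmult_lt_0_compat. lra. apply Rdiv_lt_0_compat; lra.
  assert (INR k / INR KK < 1). { apply Rmult_lt_reg_r with (INR KK); auto. field_simplify; lra. }
  nra.
Qed.

Lemma inner_sum p : (0 < p < 2 * KK)%nat ->
  sum_n (fun j => ((ww ^ p) ^ j)%C) L = if (p =? KK)%nat then RtoC (INR KK) else RtoC 0.
Proof.
  intros Hp. destruct (p =? KK)%nat eqn:E.
  - apply Nat.eqb_eq in E. subst. rewrite ww_K.
    rewrite (sum_n_ext _ (fun _ : nat => RtoC 1)). apply csum_const1. intros; apply Cpow_1_l.
  - apply Nat.eqb_neq in E. apply geo_zero.
    + rewrite <- Cpow_mult_r. rewrite Nat.mul_comm, Cpow_mult_r. fold KK. rewrite ww_K. apply Cpow_1_l.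
    + destruct (Nat.lt_ge_cases p KK).
      * apply ww_ne1; lia.
      * replace p with (KK + (p - KK))%nat by lia. rewrite Cpow_add_r, ww_K, Cmult_1_l.
        apply ww_ne1. lia.
Qed.

Lemma dft (e : nat -> C) (n0 : nat) (r : R) : (n0 <= L)%nat ->
  sum_n (fun j => (sum_n (fun m => e m * (r * ww ^ j) ^ m) L * (ww ^ j) ^ (KK - n0))%C) L
  = (RtoC (INR KK) * (e n0 * r ^ n0))%C.
Proof.
  intros Hn0.
  rewrite (sum_n_ext _ (fun j => sum_n (fun m => (e m * r ^ m) * (ww ^ (m + (KK - n0))) ^ j)%C L)).
  2:{ intros j. rewrite <- csum_mult_r. apply sum_n_ext. intros m.
      rewrite Cpow_mult_l.
      rewrite <- !Cpow_mult_r. rewrite (Nat.mul_comm (m + (KK - n0))).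
      rewrite Nat.mul_add_distr_l, Cpow_add_r. cs. ring. }
  rewrite sum_n_switch.
  rewrite (sum_n_ext_loc _ (fun m => if (m =? n0)%nat then (RtoC (INR KK) * (e n0 * (RtoC r ^ n0)))%C else RtoC 0)).
  2:{ intros m Hm. rewrite csum_mult_l.
      rewrite inner_sum by (unfold KK in *; lia).
      destruct (m =? n0)%nat eqn:E1.
      + apply Nat.eqb_eq in E1. subst. replace (n0 + (KK - n0) =? KK)%nat with true.
        cs. ring. symmetry. apply Nat.eqb_eq. unfold KK in *; lia.
      + replace (m + (KK - n0) =? KK)%nat with false. cs. ring.
        symmetry. apply Nat.eqb_neq. apply Nat.eqb_neq in E1. unfold KK in *; lia. }
  rewrite csum_delta by auto. reflexivity.
Qed.
End DFT.

Lemma rsum_stable (u : nat -> R) D k : (forall m, (D < m)%nat -> u m = 0) -> sum_n u (D + k) = sum_n u D.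
Proof.
  intros H. induction k. rewrite Nat.add_0_r. reflexivity.
  rewrite Nat.add_succ_r, sum_Sn, IHk, H by lia. cs. ring.
Qed.

Lemma series_finite (u : nat -> R) D : (forall m, (D < m)%nat -> u m = 0) -> Series u = sum_n u D.
Proof.
  intros H. apply is_series_unique.
  change (is_lim_seq (sum_n u) (sum_n u D)).
  apply (is_lim_seq_ext_loc (fun _ => sum_n u D)).
  - exists D. intros n Hn. replace n with (D + (n - D))%nat by lia. rewrite rsum_stable; auto.
  - apply is_lim_seq_const.
Qed.

Lemma fst_csum (f : nat -> C) n : fst (sum_n f n) = sum_n (fun m => fst (f m)) n.
Proof. induction n. rewrite !sum_O. reflexivity. rewrite !sum_Sn, <- IHn. reflexivity. Qed.
Lemma snd_csum (f : nat -> C) n : snd (sum_n f n) = sum_n (fun m => snd (f m)) n.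
Proof. induction n. rewrite !sum_O. reflexivity. rewrite !sum_Sn, <- IHn. reflexivity. Qed.

Lemma PS_finite (a : nat -> C) D z : (forall m, (D < m)%nat -> a m = 0%C) ->
  PS a z = sum_n (fun m => (a m * z ^ m)%C) D.
Proof.
  intros H. unfold PS. apply injective_projections; cbn [fst snd].
  - rewrite series_finite with (D := D). rewrite fst_csum. reflexivity.
    intros m Hm. unfold term. rewrite H by auto. simpl. ring.
  - rewrite series_finite with (D := D). rewrite snd_csum. reflexivity.
    intros m Hm. unfold term. rewrite H by auto. simpl. ring.
Qed.

Lemma polcomb_big N c m : (2 ^ N < m)%nat -> polcomb N c m = 0%C.
Proof.
  intros Hm. unfold polcomb. apply csum_zero. intros k Hk. unfold Pol.
  destruct ((1 <=? m)%nat && sigma_is m k) eqn:E.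
  - exfalso. apply andb_true_iff in E. destruct E as [_ E]. apply sigma_is_iter in E.
    pose proof (le_iter k m). rewrite E in H.
    pose proof (Nat.pow_le_mono_r 2 k N ltac:(lia) Hk). lia.
  - cs. ring.
Qed.

Lemma polcomb_n0 N c m : ~ sigma_finite m -> polcomb N c m = 0%C.
Proof.
  intros Hm. unfold polcomb. apply csum_zero. intros k Hk. unfold Pol.
  destruct ((1 <=? m)%nat && sigma_is m k) eqn:E.
  - exfalso. apply andb_true_iff in E. destruct E as [_ E]. apply sigma_is_iter in E.
    apply Hm. exists k. auto.
  - cs. ring.
Qed.

Lemma geo_u1 (z : C) L : (sum_n (fun m => u1 m * z ^ m) L * (1 - z))%C = (z - z ^ (S L))%C.
Proof.
  induction L. rewrite sum_O. unfold u1. simpl. ring.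
  rewrite sum_Sn. cs. rewrite Cmult_plus_distr_r, IHL. unfold u1. simpl. ring.
Qed.

Lemma geo_u1' (z : C) L : z <> 1%C ->
  sum_n (fun m => (u1 m * z ^ m)%C) L = (z / (1 - z) - z ^ (S L) / (1 - z))%C.
Proof.
  intros Hz. assert (H1 : (1 - z)%C <> 0%C).
  { intros E. apply Hz. rewrite <- (Cplus_0_l z), <- E. ring. }
  pose proof (geo_u1 z L) as G.
  set (S := sum_n (fun m => (u1 m * z ^ m)%C) L) in *. cs.
  assert (E : S = (S * (1 - z) / (1 - z))%C) by (field; auto).
  rewrite E, G. field. auto.
Qed.

Lemma pow_le1 x k : 0 <= x <= 1 -> x ^ k <= 1.
Proof. intros H. induction k; simpl; nra. Qed.

Lemma Cmod_1minus (z : C) : 1 - Cmod z <= Cmod (1 - z).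
Proof.
  pose proof (Cmod_triangle (1 - z)%C z). replace (1 - z + z)%C with (RtoC 1) in H by ring.
  rewrite Cmod_1 in H. lra.
Qed.

Lemma c_to_a : inZ (fun z => (z / (1 - z))%C) -> forall n : nat, (1 <= n)%nat -> sigma_finite n.
Proof.
  intros HZ n0 Hn0. apply NNPP. intros Hns.
  set (r := /2).
  assert (Hr : 0 < r < 1) by (unfold r; lra).
  assert (Hrn : 0 < r ^ n0) by (apply pow_lt; lra).
  destruct (HZ r (r ^ n0 / 4) Hr ltac:(lra)) as [N [c HN]].
  set (L := (n0 + 2 + 2 ^ N)%nat).
  set (P := polcomb N c).
  set (e := fun m => (u1 m - P m)%C).
  assert (Hb : forall z : C, Cmod z = r -> Cmod (sum_n (fun m => (e m * z ^ m)%C) L) <= r ^ n0 / 2).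
  { intros z Hz.
    assert (Hz1 : z <> 1%C). { intros E. rewrite E, Cmod_1 in Hz. unfold r in Hz. lra. }
    rewrite (sum_n_ext _ (fun m => (u1 m * z ^ m - P m * z ^ m)%C)) by (intros; unfold e; cs; ring).
    rewrite csum_minus, geo_u1' by auto.
    rewrite <- PS_finite.
    2:{ intros m Hm. apply polcomb_big. unfold L in Hm. lia. }
    replace (z / (1 - z) - z ^ S L / (1 - z) - PS P z)%C with ((z / (1 - z) - PS P z) - z ^ S L / (1 - z))%C by ring.
    eapply Rle_trans. apply Cmod_triangle. rewrite Cmod_opp.
    assert (A : Cmod (z / (1 - z) - PS P z)%C < r ^ n0 / 4) by (apply HN; lra).
    assert (H1 : (1 - z)%C <> 0%C).
    { intros E. apply Hz1. rewrite <- (Cplus_0_l z), <- E. ring. }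
    rewrite Cmod_div by auto. rewrite Cmod_pow, Hz.
    pose proof (Cmod_1minus z). rewrite Hz in H.
    assert (B : r ^ S L / Cmod (1 - z) <= r ^ (n0 + 2)).
    { unfold L. replace (S (n0 + 2 + 2 ^ N)) with ((n0 + 2) + S (2 ^ N))%nat by lia.
      rewrite pow_add. simpl (r ^ S _). 
      assert (0 <= r ^ (2 ^ N) <= 1) by (split; [apply pow_le; lra | apply pow_le1; lra]).
      assert (0 < r ^ (n0 + 2)) by (apply pow_lt; lra).
      apply Rle_div_l. unfold r in *; lra.
      unfold r in *. nra. }
    rewrite pow_add in B. simpl (r ^ 2) in B. unfold r in *. nra. }
  pose proof (dft L e n0 r ltac:(unfold L; lia)) as D.
  apply (f_equal Cmod) in D.
  rewrite Cmod_mult, Cmod_mult, Cmod_R, Cmod_pow, Cmod_R in D.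
  assert (E0 : e n0 = 1%C). { unfold e, u1, P. rewrite polcomb_n0 by auto. destruct n0; [lia|]. simpl. ring. }
  rewrite E0, Cmod_1 in D.
  pose proof (Cmod_csum (fun j => (sum_n (fun m => (e m * (r * ww L ^ j) ^ m)%C) L * (ww L ^ j) ^ (KK L - n0))%C) L) as S1.
  rewrite D in S1.
  assert (S2 : sum_n (fun j => Cmod (sum_n (fun m => (e m * (r * ww L ^ j) ^ m)%C) L * (ww L ^ j) ^ (KK L - n0))%C) L
               <= INR (S L) * (r ^ n0 / 2)).
  { apply rsum_bound. intros j Hj. rewrite Cmod_mult, !Cmod_pow.
    unfold ww at 2. rewrite Cmod_cis, !pow1, Rmult_1_r.
    apply Hb. rewrite Cmod_mult, Cmod_pow. unfold ww. rewrite Cmod_cis, pow1, Cmod_R. unfold r. rewrite Rabs_pos_eq; lra. }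
  unfold KK in S1, S2. rewrite Rabs_pos_eq in S1 by apply pos_INR. rewrite Rabs_pos_eq in S1 by lra.
  assert (0 < INR (S L)) by (apply lt_0_INR; lia).
  pose proof (Rle_trans _ _ _ S1 S2) as S3. clear -S3 H Hrn. nra.
Qed.

Lemma fst_le_Cmod (c : C) : Rabs (fst c) <= Cmod c.
Proof. pose proof (Rmax_Cmod c). pose proof (Rmax_l (Rabs (fst c)) (Rabs (snd c))). lra. Qed.
Lemma snd_le_Cmod (c : C) : Rabs (snd c) <= Cmod c.
Proof. pose proof (Rmax_Cmod c). pose proof (Rmax_r (Rabs (fst c)) (Rabs (snd c))). lra. Qed.

Lemma Cmod_le_sum (x : C) : Cmod x <= Rabs (fst x) + Rabs (snd x).
Proof.
  unfold Cmod. rewrite <- (sqrt_pow2 (Rabs (fst x) + Rabs (snd x))).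
  2:{ pose proof (Rabs_pos (fst x)). pose proof (Rabs_pos (snd x)). lra. }
  apply sqrt_le_1_alt.
  rewrite <- (pow2_abs (fst x)), <- (pow2_abs (snd x)).
  pose proof (Rabs_pos (fst x)). pose proof (Rabs_pos (snd x)). nra.
Qed.

Lemma series_geom_val r : 0 <= r < 1 -> Series (fun k => r ^ k) = / (1 - r).
Proof. intros H. apply is_series_unique, is_series_geom. rewrite Rabs_pos_eq; lra. Qed.

Lemma tail_bound (u : nat -> R) r M : 0 <= r < 1 -> (forall m, Rabs (u m) <= r ^ m) ->
  Rabs (Series u - sum_n u M) <= r ^ (S M) / (1 - r).
Proof.
  intros Hr Hu.
  assert (Hg : ex_series (fun k => r ^ k)) by (apply ex_series_geom; rewrite Rabs_pos_eq; lra).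
  assert (Ha : ex_series (fun m => Rabs (u m))).
  { apply (@ex_series_le R_AbsRing R_CompleteNormedModule _ (fun k => r ^ k)); auto.
    intros n. change (norm (Rabs (u n))) with (Rabs (Rabs (u n))). rewrite Rabs_Rabsolu. auto. }
  assert (Hu' : ex_series u) by (apply ex_series_Rabs; auto).
  rewrite (Series_incr_n u (S M)) by (auto; lia).
  simpl pred. rewrite <- sum_n_Reals.
  replace (sum_n u M + Series (fun k => u (S M + k)%nat) - sum_n u M) with (Series (fun k => u (S M + k)%nat)) by ring.
  assert (Hg2 : ex_series (fun k => r ^ (S M) * r ^ k)).
  { apply (ex_series_scal_l (V := R_NormedModule) (r ^ S M)) in Hg. exact Hg. }
  assert (Ht : ex_series (fun k => Rabs (u (S M + k)%nat))).
  { apply (@ex_series_le R_AbsRing R_CompleteNormedModule _ (fun k => r ^ (S M) * r ^ k)); auto.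
    intros n. change (norm (Rabs (u (S M + n)%nat))) with (Rabs (Rabs (u (S M + n)%nat))).
    rewrite Rabs_Rabsolu, <- pow_add. auto. }
  eapply Rle_trans. apply Series_Rabs. auto.
  eapply Rle_trans. apply (Series_le _ (fun k => r ^ (S M) * r ^ k)).
  - intros n. split. apply Rabs_pos. rewrite <- pow_add. auto.
  - auto.
  - rewrite Series_scal_l, series_geom_val by auto. unfold Rdiv. lra.
Qed.

Lemma PS_tail (a : nat -> C) (z : C) r M : 0 <= r < 1 -> Cmod z <= r ->
  (forall m, Cmod (a m) <= 1) ->
  Cmod (PS a z - sum_n (fun m => (a m * z ^ m)%C) M)%C <= 2 * (r ^ (S M) / (1 - r)).
Proof.
  intros Hr Hz Ha.
  assert (Hterm : forall m, Cmod (term a z m) <= r ^ m).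
  { intros m. unfold term. rewrite Cmod_mult, Cmod_pow.
    pose proof (Ha m). pose proof (Cmod_ge_0 (a m)). pose proof (Cmod_ge_0 z).
    assert (Cmod z ^ m <= r ^ m) by (apply pow_incr; lra).
    pose proof (pow_le (Cmod z) m ltac:(lra)). nra. }
  eapply Rle_trans. apply Cmod_le_sum.
  assert (E1 : fst (PS a z - sum_n (fun m => (a m * z ^ m)%C) M)%C =
     Series (fun n => fst (term a z n)) - sum_n (fun m => fst (term a z m)) M).
  { rewrite <- (fst_csum (fun m => (a m * z ^ m)%C)). reflexivity. }
  assert (E2 : snd (PS a z - sum_n (fun m => (a m * z ^ m)%C) M)%C =
     Series (fun n => snd (term a z n)) - sum_n (fun m => snd (term a z m)) M).
  { rewrite <- (snd_csum (fun m => (a m * z ^ m)%C)). reflexivity. }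
  rewrite E1, E2.
  assert (B1 := tail_bound (fun n => fst (term a z n)) r M Hr
     (fun m => Rle_trans _ _ _ (fst_le_Cmod _) (Hterm m))).
  assert (B2 := tail_bound (fun n => snd (term a z n)) r M Hr
     (fun m => Rle_trans _ _ _ (snd_le_Cmod _) (Hterm m))).
  lra.
Qed.

Lemma bound_reach (Hc : forall n : nat, (1 <= n)%nat -> sigma_finite n) M :
  exists N0, forall m, (1 <= m <= M)%nat -> exists k, (k <= N0)%nat /\ Nat.iter k T m = 1%nat.
Proof.
  induction M.
  - exists 0%nat. intros m Hm. lia.
  - destruct IHM as [N0 HN0]. destruct (Hc (S M) ltac:(lia)) as [k Hk].
    exists (Nat.max N0 k). intros m Hm.
    destruct (Nat.eq_dec m (S M)) as [->|E].
    + exists k. split; [lia|auto].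
    + destruct (HN0 m ltac:(lia)) as [k' [Hk' H']]. exists k'. split; [lia|auto].
Qed.

Lemma div_bound x y X Y : 0 <= x <= X -> 0 < Y <= y -> x / y <= X / Y.
Proof.
  intros H1 H2. unfold Rdiv. apply Rmult_le_compat; try lra.
  left. apply Rinv_0_lt_compat. lra.
  apply Rinv_le_contravar; lra.
Qed.

Lemma a_to_d : (forall n : nat, (1 <= n)%nat -> sigma_finite n) ->
  cvg_AD (fun n => Nat.iter n Fop zz2) (fun z => (z / (1 - z))%C).
Proof.
  intros Hc r eps Hr He.
  destruct (pow_lt_1_zero r ltac:(rewrite Rabs_pos_eq; lra) (eps * (1 - r) / 4) ltac:(apply Rdiv_lt_0_compat; nra)) as [M HM].
  specialize (HM (S M) ltac:(lia)). rewrite Rabs_pos_eq in HM by (apply pow_le; lra).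
  destruct (bound_reach Hc M) as [N0 HN0]. exists N0. intros n Hn z Hz.
  rewrite iter_zz2. set (a := polcomb (S n) (fun _ => 1%C)).
  assert (Ha1 : forall m, Cmod (a m) <= 1).
  { intros m. unfold a. rewrite polcomb1. destruct (_ && _).
    rewrite Cmod_1; lra. rewrite Cmod_0; lra. }
  assert (Hau : forall m, (m <= M)%nat -> (a m * z ^ m)%C = (u1 m * z ^ m)%C).
  { intros m Hm. f_equal. unfold a. rewrite polcomb1. unfold u1.
    destruct m as [|m]. reflexivity. simpl ((1 <=? S m)%nat). simpl andb.
    replace (reachb (S m) (S n)) with true. reflexivity.
    symmetry. apply reachb_spec. destruct (HN0 (S m) ltac:(lia)) as [k [Hk H]].
    exists k. split; [lia|auto]. }
  assert (Hz1 : z <> 1%C). { intros E. rewrite E, Cmod_1 in Hz. lra. }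
  assert (H1z : (1 - z)%C <> 0%C). { intros E. apply Hz1. rewrite <- (Cplus_0_l z), <- E. ring. }
  pose proof (PS_tail a z r M ltac:(lra) Hz Ha1) as T1.
  rewrite (sum_n_ext_loc _ _ _ Hau), geo_u1' in T1 by auto.
  replace (PS a z - z / (1 - z))%C with
    ((PS a z - (z / (1 - z) - z ^ S M / (1 - z))) - z ^ S M / (1 - z))%C by ring.
  eapply Rle_lt_trans. apply Cmod_triangle. rewrite Cmod_opp.
  rewrite Cmod_div by auto. rewrite Cmod_pow.
  assert (B : Cmod z ^ S M / Cmod (1 - z) <= r ^ S M / (1 - r)).
  { apply div_bound. split. apply pow_le, Cmod_ge_0. apply pow_incr. split; [apply Cmod_ge_0|lra].
    pose proof (Cmod_1minus z). lra. }
  assert (r ^ S M / (1 - r) < eps / 4).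
  { apply Rmult_lt_reg_r with (1 - r). lra. field_simplify; lra. }
  lra.
Qed.

Theorem mainTheorem12 :
  ((forall n : nat, (1 <= n)%nat -> sigma_finite n) <-> fixed_space_dim2) /\
  (fixed_space_dim2 <-> inZ (fun z => (z / (1 - z))%C)) /\
  (inZ (fun z => (z / (1 - z))%C) <->
     cvg_AD (fun n => Nat.iter n Fop zz2) (fun z => (z / (1 - z))%C)).
Proof.
  split; [split; [apply a_to_b | apply b_to_a]|].
  split; split.
  - intros H. apply d_to_c, a_to_d, b_to_a, H.
  - intros H. apply a_to_b, c_to_a, H.
  - intros H. apply a_to_d, c_to_a, H.
  - apply d_to_c.
Qed.
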